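(* Let $\gamma:\mathbb{Z}_{>0}\to(0,\infty)$ satisfy $\lim_{n\to\infty}\gamma(n)=0$, and let $\delta>0$, $\theta>0$. Consider the birth–death continuous-time Markov chain on $\mathbb{Z}_{\ge0}$ with transitions $0\to1$ at rate $\theta$, $n\to n+1$ at rate $n\gamma(n)$ for $n\ge1$, and $n\to n-1$ at rate $n\delta$ for $n\ge1$, and for $n\ge1$ let $T_n$ be the first hitting time of $0$ from $n$. Then for every $\epsilon\in(0,\delta)$ there is a constant $h(\epsilon)$, independent of $n$, such that for all $n\ge1$, $$\frac{\ln(n+1)}{\delta}\le\mathbb{E}[T_n]\le\frac{\ln n}{\delta-\epsilon}+h(\epsilon).$$ *)

(* Defs.v *)
From HB Require Import structures.
From mathcomp Require Import all_boot all_order all_algebra.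
From mathcomp Require Import all_classical all_reals all_analysis.
Set Implicit Arguments. Unset Strict Implicit. Unset Printing Implicit Defensive.
Import Order.TTheory GRing.Theory Num.Theory.
Local Open Scope ring_scope.

(* Birth-death chain on nat: 0 -> 1 at rate theta; for x >= 1,
   x -> x+1 at rate x * gamma x, x -> x-1 at rate x * delta.
   Only the chain killed at 0 matters for the hitting time of 0. *)
Section BD.
Variables (R : realType) (gamma : nat -> R) (delta : R).

Definition bd_rate (x : nat) : R := x%:R * gamma x + x%:R * delta.
Definition bd_pup (x : nat) : R := (x%:R * gamma x) / bd_rate x.
Definition bd_pdown (x : nat) : R := (x%:R * delta) / bd_rate x.

(* bd_occ n k y = P_n(X_k = y and X_j <> 0 for all j <= k),
   where X is the embedded jump chain started at n. *)
Fixpoint bd_occ (n k y : nat) {struct k} : R :=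
  match k with
  | 0 => (y == n)%:R
  | k'.+1 =>
      if y == 0%N then 0
      else (if y.-1 == 0%N then 0 else bd_occ n k' y.-1 * bd_pup y.-1)
           + bd_occ n k' y.+1 * bd_pdown y.+1
  end.

(* E[T_n] = E[ sum over the jumps before hitting 0 of the (exponential)
   holding times ] = sum_k sum_{y>=1} P_n(X_k = y, not yet at 0) / q(y).
   At step k the chain is in [n-k, n+k], so the inner sum is finite. *)
Definition bd_expected_hitting_time (n : nat) : \bar R :=
  (\sum_(0 <= k <oo) ((\sum_(1 <= y < n + k + 1) bd_occ n k y / bd_rate y)%:E))%E.
End BD.

(* Main.v *)
From HB Require Import structures.
From mathcomp Require Import all_boot all_order all_algebra.
From mathcomp Require Import all_classical all_reals all_analysis.
From mathcomp Require Import ring lra zify.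
Import Order.TTheory GRing.Theory Num.Theory.
Require Import Defs.
Local Open Scope classical_set_scope.
Local Open Scope ring_scope.


Lemma le_sum_term (R : realType) m n (g : nat -> R) i : (m <= i < n)%N ->
  (forall j, (m <= j < n)%N -> 0 <= g j) -> g i <= \sum_(m <= j < n) g j.
Proof.
move=> /andP[mi i_n] g0.
rewrite (@big_cat_nat _ _ _ i) ?(ltnW i_n) //= (@big_ltn _ _ _ i n) //.
have h1 : 0 <= \sum_(m <= j < i) g j.
  rewrite big_nat_cond sumr_ge0 // => j /andP[/andP[mj ji] _]; apply: g0.
  by rewrite mj (ltn_trans ji).
have h2 : 0 <= \sum_(i.+1 <= j < n) g j.
  rewrite big_nat_cond sumr_ge0 // => j /andP[/andP[mj ji] _]; apply: g0.
  by rewrite ji (leq_trans mi) // ltnW.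
by rewrite addrCA lerDl addr_ge0.
Qed.

Lemma ln_le_H (R : realType) m : ln (m.+1)%:R <= \sum_(1 <= i < m.+1) ((i%:R : R)^-1).
Proof.
elim: m => [|m IH]; first by rewrite ln1 big_geq.
rewrite big_nat_recr //=.
have hm : 0 < (m.+1%:R : R) by rewrite ltr0n.
have -> : (m.+2%:R : R) = m.+1%:R * (1 + (m.+1%:R)^-1).
  by rewrite mulrDr mulr1 mulfV ?gt_eqF // -natr1.
rewrite lnM ?posrE ?addr_gt0 ?invr_gt0 //.
have hx0 : 0 < (m.+1%:R : R)^-1 by rewrite invr_gt0.
move: IH hx0; set x := (m.+1%:R : R)^-1; set s := \sum_(_ <= _ < _) _; move=> IH hx0.
have hx : -1 < x by lra.
have := le_ln1Dx hx; lra.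
Qed.

Lemma H_le_ln (R : realType) m : (0 < m)%N ->
  \sum_(1 <= i < m.+1) ((i%:R : R)^-1) <= 1 + ln m%:R.
Proof.
elim: m => [//|m IH] _.
case: m IH => [|m] IH; first by rewrite big_nat1 invr1 ln1 addr0.
rewrite big_nat_recr //=.
have := IH isT => {}IH.
suff : ln (m.+1%:R : R) + (m.+2%:R)^-1 <= ln m.+2%:R.
  move: IH; set s := \sum_(_ <= _ < _) _; set l1 := ln _; set l2 := ln _.
  set x := _^-1; lra.
have hm : 0 < (m.+2%:R : R) by rewrite ltr0n.
have -> : (m.+1%:R : R) = m.+2%:R * (1 + - (m.+2%:R)^-1).
  by rewrite mulrDr mulr1 mulrN mulfV ?gt_eqF // -(natr1 (R:=R) m.+1) addrK.
have hx1 : (m.+2%:R : R)^-1 < 1 by rewrite invf_lt1 // ltr1n.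
move: hx1; set x := (m.+2%:R : R)^-1 => hx1.
have hx : -1 < - x by lra.
have hp : 0 < 1 + - x by lra.
rewrite lnM ?posrE //.
have := le_ln1Dx hx; lra.
Qed.

Section BDproof.
Variables (R : realType) (gamma : nat -> R) (delta : R).
Hypothesis gamma_pos : forall n : nat, (0 < n)%N -> 0 < gamma n.
Hypothesis delta_pos : 0 < delta.

Local Notation u := (bd_occ gamma delta).
Local Notation q := (bd_rate gamma delta).
Local Notation pu := (bd_pup gamma delta).
Local Notation pd := (bd_pdown gamma delta).

Lemma q_gt0 y : (0 < y)%N -> 0 < q y.
Proof.
move=> y0; rewrite /bd_rate addr_gt0 // mulr_gt0 // ?ltr0n //; exact: gamma_pos.
Qed.

Lemma pu_ge0 y : (0 < y)%N -> 0 <= pu y.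
Proof.
move=> y0; rewrite /bd_pup divr_ge0 ?ltW ?q_gt0 // mulr_gt0 ?ltr0n //; exact: gamma_pos.
Qed.

Lemma pd_ge0 y : (0 < y)%N -> 0 <= pd y.
Proof.
move=> y0; rewrite /bd_pdown divr_ge0 ?ltW ?q_gt0 // mulr_gt0 ?ltr0n //.
Qed.

Lemma occ_ge0 n k y : 0 <= u n k y.
Proof.
elim: k y => [|k IH] y /=; first by rewrite ler0n.
case: eqP => // _; rewrite addr_ge0 //.
  case: (y.-1 =P 0%N) => // /eqP y1.
  by rewrite mulr_ge0 // pu_ge0 // lt0n.
by rewrite mulr_ge0 // pd_ge0.
Qed.

Lemma occ_supp n k y : (n + k < y)%N -> u n k y = 0.
Proof.
elim: k y => [|k IH] y /=.
  by rewrite addn0 => ny; case: eqP => // yn; move: ny; rewrite yn ltnn.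
move=> ny; case: eqP => // /eqP y0.
have h1 : (n + k < y.+1)%N by lia.
have h2 : (n + k < y.-1)%N by lia.
by rewrite (IH _ h1) (IH _ h2) !mul0r if_same add0r.
Qed.

Definition Lf (f : nat -> R) y := f y - pu y * f y.+1 - pd y * f y.-1.
Definition Fs (f : nat -> R) n k := \sum_(1 <= y < n + k + 1) u n k y * f y.
Definition a n k := \sum_(1 <= y < n + k + 1) u n k y / q y.

Lemma F_step f n k : f 0%N = 0 ->
  Fs f n k - Fs f n k.+1 = \sum_(1 <= y < n + k + 1) u n k y * Lf f y.
Proof.
move=> f0; rewrite /Fs.
set N := (n + k + 1)%N.
have -> : (n + k.+1 + 1 = N.+1)%N by rewrite /N; lia.
have e1 : \sum_(1 <= y < N.+1) u n k.+1 y * f y =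
  \sum_(1 <= y < N.+1) ((if y.-1 == 0%N then 0 else u n k y.-1 * pu y.-1) * f y)
  + \sum_(1 <= y < N.+1) (u n k y.+1 * pd y.+1 * f y).
  rewrite -big_split /=; apply: eq_big_nat => y /andP[y1 _] /=.
  by case: eqP => [y0|_]; [move: y1; rewrite y0|rewrite mulrDl].
have e2 : \sum_(1 <= y < N.+1) ((if y.-1 == 0%N then 0 else u n k y.-1 * pu y.-1) * f y)
   = \sum_(1 <= y < N) u n k y * pu y * f y.+1.
  rewrite big_ltn; last by rewrite /N addn1.
  rewrite /= mul0r add0r big_add1 /=.
  apply: eq_big_nat => y /andP[y1 _]; case: eqP => // y0; move: y1; rewrite y0 //.
have e3 : \sum_(1 <= y < N.+1) (u n k y.+1 * pd y.+1 * f y)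
   = \sum_(1 <= y < N) u n k y * pd y * f y.-1.
  rewrite -(big_add1 _ _ 1 N.+2 xpredT (fun y => u n k y * pd y * f y.-1)) /=.
  have N1 : (1 <= N)%N by rewrite /N addn1.
  transitivity (\sum_(1 <= i < N.+2) u n k i * pd i * f i.-1).
    by rewrite [in RHS]big_ltn //= f0 mulr0 add0r.
  rewrite big_nat_recr //= big_nat_recr //=.
  rewrite !occ_supp ?mul0r ?addr0 //; rewrite /N; lia.
rewrite e1 e2 e3 opprD addrA -!sumrB; apply: eq_big_nat => y _.
rewrite /Lf; ring.
Qed.


Lemma F0 f n : (0 < n)%N -> Fs f n 0 = f n.
Proof.
move=> n0; rewrite /Fs addn0 addn1 big_nat_recr //= eqxx mul1r.
rewrite big_nat_cond big1 ?add0r // => y /andP[/andP[_ yn] _].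
by rewrite ltn_eqF // mul0r.
Qed.

Lemma tele f n K : f 0%N = 0 ->
  Fs f n 0 - Fs f n K = \sum_(0 <= k < K) \sum_(1 <= y < n + k + 1) u n k y * Lf f y.
Proof.
move=> f0; elim: K => [|K IH]; first by rewrite subrr big_geq.
by rewrite big_nat_recr //= -IH -F_step // addrA subrK.
Qed.

Definition fd (d : nat -> R) y := \sum_(1 <= i < y.+1) d i.

Lemma fd0 d : fd d 0%N = 0.
Proof. by rewrite /fd big_geq. Qed.

Lemma Lf_fd d y : (0 < y)%N ->
  Lf (fd d) y * q y = y%:R * (delta * d y - gamma y * d y.+1).
Proof.
case: y => // y _.
have hq : q y.+1 != 0 by rewrite gt_eqF // q_gt0.
rewrite /Lf /bd_pup /bd_pdown /= /fd.
rewrite (big_nat_recr y.+2) //= (big_nat_recr y.+1) //=.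
move: hq; rewrite /bd_rate => hq.
set S := \sum_(1 <= i < y.+1) d i.
field; by move: hq; rewrite -[y.+1]add1n natrD.
Qed.

Lemma Lf_le f y : (0 < y)%N -> Lf f y * q y <= 1 -> Lf f y <= 1 / q y.
Proof. by move=> y0 h; rewrite ler_pdivlMr // q_gt0. Qed.

Lemma Lf_ge f y : (0 < y)%N -> 1 <= Lf f y * q y -> 1 / q y <= Lf f y.
Proof. by move=> y0 h; rewrite ler_pdivrMr // q_gt0. Qed.

Lemma a_ge0 n k : 0 <= a n k.
Proof.
rewrite /a sumr_ge0 // => y _; rewrite divr_ge0 ?occ_ge0 //.
case: y => [|y]; first by rewrite /bd_rate !mul0r addr0.
by rewrite ltW // q_gt0.
Qed.

Lemma Lf_sum f n k : (forall y, (0 < y)%N -> 1 / q y <= Lf f y) ->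
  a n k <= \sum_(1 <= y < n + k + 1) u n k y * Lf f y.
Proof.
move=> Hf; apply: ler_sum_nat => y /andP[y1 _].
by apply: le_trans (ler_wpM2l (occ_ge0 n k y) (Hf y y1)); rewrite div1r.
Qed.

Lemma Lf_sum' f n k : (forall y, (0 < y)%N -> Lf f y <= 1 / q y) ->
  \sum_(1 <= y < n + k + 1) u n k y * Lf f y <= a n k.
Proof.
move=> Hf; apply: ler_sum_nat => y /andP[y1 _].
by apply: le_trans (ler_wpM2l (occ_ge0 n k y) (Hf y y1)) _; rewrite div1r.
Qed.

Lemma upper_gen f n : (0 < n)%N -> f 0%N = 0 ->
  (forall y, (0 < y)%N -> 1 / q y <= Lf f y) -> (forall y, 0 <= f y) ->
  (bd_expected_hitting_time gamma delta n <= (f n)%:E)%E.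
Proof.
move=> n0 f0 Hf fpos.
have hS K : \sum_(0 <= k < K) a n k <= f n.
  have := tele f n K f0; rewrite F0 // => e.
  have hF : 0 <= Fs f n K by rewrite /Fs sumr_ge0 // => y _; rewrite mulr_ge0 ?occ_ge0.
  have : \sum_(0 <= k < K) a n k <= f n - Fs f n K.
    by rewrite e; apply: ler_sum_nat => k _; exact: Lf_sum.
  lra.
rewrite /bd_expected_hitting_time.
apply: lime_le.
  by apply: is_cvg_nneseries => k _ _; rewrite lee_fin a_ge0.
by apply: nearW => K; rewrite sumEFin lee_fin hS.
Qed.

Lemma lower_gen f n c : (0 < n)%N -> f 0%N = 0 ->
  (forall y, (0 < y)%N -> Lf f y <= 1 / q y) -> 0 < c ->
  (forall y, (0 < y)%N -> f y <= c / q y) ->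
  ((f n)%:E <= bd_expected_hitting_time gamma delta n)%E.
Proof.
move=> n0 f0 Hf c0 Hc.
have key K : f n <= \sum_(0 <= k < K) a n k + c * a n K.
  have := tele f n K f0; rewrite F0 // => e.
  have h1 : f n - Fs f n K <= \sum_(0 <= k < K) a n k.
    by rewrite e; apply: ler_sum_nat => k _; exact: Lf_sum'.
  have h2 : Fs f n K <= c * a n K.
    rewrite /Fs /a mulr_sumr; apply: ler_sum_nat => y /andP[y1 _].
    by rewrite mulrCA ler_wpM2l ?occ_ge0 // Hc.
  lra.
have Sle K : ((\sum_(0 <= k < K) a n k)%:E <= bd_expected_hitting_time gamma delta n)%E.
  rewrite -sumEFin; apply: nneseries_lim_ge => k _ _; rewrite lee_fin a_ge0 //.
move: Sle; case: (bd_expected_hitting_time gamma delta n) => [e| |] Sle.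
- have Se K : \sum_(0 <= k < K) a n k <= e by rewrite -lee_fin Sle.
  have e0 : 0 <= e by have := Se 0%N; rewrite big_geq.
  rewrite lee_fin leNgt; apply/negP => hlt.
  set eta := f n - e.
  have eta0 : 0 < eta by rewrite /eta subr_gt0.
  have aK K : eta / c <= a n K.
    rewrite ler_pdivrMr // mulrC; have := key K; have := Se K; rewrite /eta; lra.
  set L := Num.Def.archi_bound (e / (eta / c)).
  have hL : e / (eta / c) < L%:R by apply: archi_boundP; rewrite divr_ge0 // ltW // divr_gt0.
  have : L%:R * (eta / c) <= \sum_(0 <= k < L) a n k.
    have := @ler_sum_nat R 0 L (fun _ => eta / c) (fun k => a n k).
    rewrite sumr_const_nat subn0 mulr_natl => h; apply: h => k _; exact: aK.
  move: hL; rewrite ltr_pdivrMr ?divr_gt0 // => hL hS.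
  have := Se L; lra.
- by rewrite leey.
- by have := Sle 0%N; rewrite big_geq.
Qed.

Lemma upper_bound eps : 0 < eps -> eps < delta -> forall M, (0 < M)%N ->
  (forall y, (M <= y)%N -> gamma y <= eps) ->
  exists h : R, forall n : nat, (1 <= n)%N ->
    (bd_expected_hitting_time gamma delta n <= (ln (n%:R) / (delta - eps) + h)%:E)%E.
Proof.
move=> e0 ed M M0 HM.
set A := (delta - eps)^-1.
have A0 : 0 < A by rewrite invr_gt0 subr_gt0.
have hA : A * (delta - eps) = 1 by rewrite mulVf // gt_eqF // subr_gt0.
set G := \sum_(1 <= i < M) gamma i.
have G0 : 0 <= G.
  by rewrite /G big_nat_cond sumr_ge0 // => i /andP[/andP[i1 _] _]; rewrite ltW // gamma_pos.
set lam := (G + 1) / delta + 1.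
have hlam : delta * lam = G + 1 + delta.
  by rewrite /lam mulrDr mulr1 mulrCA mulfV ?gt_eqF // mulr1.
have lam1 : 1 <= lam by rewrite /lam lerDr divr_ge0 // ?addr_ge0 // ltW.
set C := A + 1.
have C1 : 1 <= C by rewrite /C lerDr ltW.
pose g i := if (i < M)%N then C * lam ^+ (M - i) else 0.
pose dU i := if (i < M)%N then C * lam ^+ (M - i) else A / i%:R.
have C0 : 0 <= C by apply: le_trans C1; exact: ler01.
have lam0 : 0 <= lam by apply: le_trans lam1; exact: ler01.
have g0 i : 0 <= g i.
  by rewrite /g; case: ifP => // _; rewrite mulr_ge0 ?exprn_ge0.
have dU0 i : 0 <= dU i.
  rewrite /dU; case: ifP => _; first by rewrite mulr_ge0 ?exprn_ge0.
  by rewrite divr_ge0 ?ler0n // ltW.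
pose f := fd dU.
have fpos y : 0 <= f y by rewrite /f /fd sumr_ge0.
have Hcond y : (0 < y)%N -> 1 <= y%:R * (delta * dU y - gamma y * dU y.+1).
  move=> y0; have gy0 : 0 <= gamma y by rewrite ltW // gamma_pos.
  have y1 : (1 : R) <= y%:R by rewrite ler1n.
  case: (ltnP y M) => yM.
  - have hd : dU y = C * (lam * lam ^+ (M - y.+1)).
      by rewrite /dU yM -exprS subnSK.
    set P := lam ^+ (M - y.+1).
    have P1 : 1 <= P by rewrite exprn_ege1.
    have d1 : dU y.+1 <= C * P.
      rewrite /dU /P; case: ifP => // hyM.
      have -> : (M - y.+1 = 0)%N by lia.
      rewrite expr0 mulr1 /C.
      have : (y.+1%:R : R)^-1 <= 1 by rewrite invf_le1 ?ler1n ?ltr0n.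
      move=> h; have := ler_wpM2l (ltW A0) h; rewrite mulr1 => h'; by apply: le_trans h' _; rewrite lerDl ler01.
    have hg : gamma y <= G.
      apply: (@le_sum_term R 1 M gamma y); first by rewrite y0 yM.
      by move=> j /andP[j1 _]; rewrite ltW // gamma_pos.
    have h2 := ler_pM gy0 (dU0 _) hg d1.
    rewrite hd.
    have X1 : 1 <= delta * (C * (lam * P)) - gamma y * dU y.+1.
      have -> : delta * (C * (lam * P)) = (C * P) * (delta * lam) by ring.
      rewrite hlam.
      have CP1 : 1 <= C * P by rewrite mulr_ege1.
      have : 0 <= (C * P) * delta by apply: mulr_ge0; [exact: le_trans ler01 CP1 | exact: ltW].
      move: h2 CP1; set CP := C * P; set gd := gamma y * dU y.+1.
      have -> : CP * (G + 1 + delta) = G * CP + CP + CP * delta by ring.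
      have -> : G * (C * P) = G * CP by [].
      move=> h2 CP1 h3.
      lra.
    by rewrite mulr_ege1.
  - have e1 : (y < M)%N = false by lia.
    have e2 : (y.+1 < M)%N = false by lia.
    rewrite /dU e1 e2.
    have hy : gamma y <= eps by apply: HM.
    have hy0 : (0 : R) < y%:R by rewrite ltr0n.
    have h1 : A / y.+1%:R <= A / y%:R.
      by apply: ler_wpM2l; [exact: ltW | rewrite lef_pV2 ?posrE ?ltr0n // ler_nat].
    have h2 := ler_pM gy0 (divr_ge0 (ltW A0) (ler0n _ _)) hy h1.
    have h3 : y%:R * (delta * (A / y%:R) - eps * (A / y%:R)) = 1.
      by rewrite -hA; field; rewrite !gt_eqF ?subr_gt0.
    apply: (le_trans (y := y%:R * (delta * (A / y%:R) - eps * (A / y%:R)))); first by rewrite h3.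
    by apply: ler_wpM2l; [exact: ler0n | exact: lerB].
have HLf y : (0 < y)%N -> 1 / q y <= Lf f y.
  by move=> y0; apply: Lf_ge => //; rewrite Lf_fd //; exact: Hcond.
set Bb := \sum_(1 <= i < M) g i.
exists (Bb + A) => n n1.
apply: le_trans (@upper_gen f n n1 (fd0 dU) HLf fpos) _; rewrite lee_fin.
have hf : f n <= \sum_(1 <= i < n.+1) g i + A * \sum_(1 <= i < n.+1) (i%:R : R)^-1.
  rewrite mulr_sumr -big_split /=; apply: ler_sum_nat => i /andP[i1 _].
  rewrite /dU /g; case: ifP => _; last by rewrite add0r.
  by rewrite lerDl divr_ge0 ?ler0n // ltW.
have hg : \sum_(1 <= i < n.+1) g i <= Bb.
  apply: (le_trans (y := \sum_(1 <= i < n.+1 + M) g i)).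
    rewrite [X in _ <= X](@big_cat_nat _ _ _ n.+1) //= ?leq_addr //.
    by rewrite lerDl sumr_ge0.
  rewrite (@big_cat_nat _ _ _ M) //= ?leq_addl //.
  rewrite [X in _ + X <= _]big_nat_cond [X in _ + X <= _]big1 ?addr0 //.
  by move=> i /andP[/andP[Mi _] _]; rewrite /g ltnNge Mi.
have hH := @H_le_ln R n n1.
have hAH := ler_wpM2l (ltW A0) hH.
move: hf hg hAH.
generalize (f n) (\sum_(1 <= i < n.+1) g i) (\sum_(1 <= i < n.+1) (i%:R : R)^-1) (ln (n%:R : R)).
move=> fn S H l; rewrite mulrDr mulr1 (mulrC l A) => hf hg hAH.
lra.
Qed.

Lemma lower_bound M0 : (forall y, (M0 <= y)%N -> gamma y <= delta) ->
  forall n : nat, (1 <= n)%N ->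
  ((ln (n.+1)%:R / delta)%:E <= bd_expected_hitting_time gamma delta n)%E.
Proof.
move=> HM0 n n1.
set M := maxn M0 n.+1.
have nM : (n < M)%N by rewrite leq_max leqnn orbT.
have M0M : (M0 <= M)%N by rewrite leq_max leqnn.
have M1 : (0 < M)%N by lia.
have gM : 0 < gamma M := @gamma_pos M M1.
set c := (M%:R * gamma M)^-1.
have c0 : 0 < c by rewrite invr_gt0 mulr_gt0 ?ltr0n.
have hc : M%:R * gamma M * c = 1 by rewrite mulfV // gt_eqF // mulr_gt0 ?ltr0n.
pose dL y := if (y <= n)%N then (y%:R * delta)^-1 else if (y <= M)%N then 0 else - c.
pose f := fd dL.
have Hcond y : (0 < y)%N -> y%:R * (delta * dL y - gamma y * dL y.+1) <= 1.
  move=> y0; have gy0 : 0 <= gamma y by rewrite ltW // gamma_pos.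
  rewrite /dL; case: (leqP y n) => yn.
  - have d1 : 0 <= (if (y.+1 <= n)%N then (y.+1%:R * delta)^-1
                    else if (y.+1 <= M)%N then 0 else - c).
      case: ifP => _; first by rewrite invr_ge0 mulr_ge0 ?ler0n ?ltW.
      by have -> : (y.+1 <= M)%N = true by lia.
    move: d1; set d := (X in _ <= X) => d1.
    have e : y%:R * (delta * (y%:R * delta)^-1) = 1.
      by field; rewrite !gt_eqF ?ltr0n.
    have h : 0 <= y%:R * (gamma y * d) by rewrite !mulr_ge0.
    by rewrite mulrBr e lerBlDr lerDl.
  - have -> : (y.+1 <= n)%N = false by lia.
    case: (leqP y M) => yM.
    + case: (leqP y.+1 M) => yM1; first by rewrite !mulr0 subrr mulr0 ler01.
      have yeq : y = M by lia.
      rewrite mulr0 sub0r !mulrN opprK yeq.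
      by rewrite mulrA hc.
    + have -> : (y.+1 <= M)%N = false by lia.
      have hy : gamma y <= delta by apply: HM0; lia.
      have h : 0 <= y%:R * (c * (delta - gamma y)).
        by apply: mulr_ge0; [exact: ler0n | apply: mulr_ge0; [exact: ltW | rewrite subr_ge0]].
      have -> : y%:R * (delta * - c - gamma y * - c) = - (y%:R * (c * (delta - gamma y))) by ring.
      lra.
have HLf y : (0 < y)%N -> Lf f y <= 1 / q y.
  by move=> y0; apply: Lf_le => //; rewrite Lf_fd //; exact: Hcond.
have fn : f n = (\sum_(1 <= i < n.+1) (i%:R : R)^-1) / delta.
  rewrite /f /fd mulr_suml; apply: eq_big_nat => i /andP[_ i_n].
  by rewrite /dL -ltnS i_n invfM.
have dL0 i : (i <= M)%N -> 0 <= dL i.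
  move=> iM; rewrite /dL; case: ifP => _; first by rewrite invr_ge0 mulr_ge0 ?ler0n ?ltW.
  by rewrite iM.
have fM0 : 0 <= f M.
  rewrite /f /fd big_nat_cond sumr_ge0 // => i /andP[/andP[_ iM] _]; apply: dL0; lia.
have ftail y : (M <= y)%N -> f y = f M - c * (y - M)%:R.
  move=> My; rewrite /f /fd (@big_cat_nat _ _ _ M.+1 1 y.+1) //= ?ltnS //.
  congr (_ + _).
  rewrite (eq_big_nat _ _ (F2 := fun _ => - c)); last first.
    move=> i /andP[Mi _]; rewrite /dL.
    have -> : (i <= n)%N = false by lia.
    by have -> : (i <= M)%N = false by lia.
  by rewrite sumr_const_nat subSS mulNrn mulr_natr.
set Z := Num.Def.archi_bound (f M / c).
have hZ : f M / c < Z%:R by apply: archi_boundP; rewrite divr_ge0 // ltW.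
have hZ' : f M < c * Z%:R by rewrite mulrC -ltr_pdivrMr.
set Y := (M + Z)%N.
have fneg y : (Y <= y)%N -> f y <= 0.
  move=> Yy; rewrite ftail; last by lia.
  have : c * Z%:R <= c * (y - M)%:R.
    by apply: ler_wpM2l; [exact: ltW | rewrite ler_nat; lia].
  lra.
set c' := 1 + \sum_(1 <= y < Y) `|f y * q y|.
have S0 : 0 <= \sum_(1 <= y < Y) `|f y * q y| by rewrite sumr_ge0.
have c'0 : 0 < c' by rewrite /c'; lra.
have Hc y : (0 < y)%N -> f y <= c' / q y.
  move=> y0; have qy := @q_gt0 y y0.
  case: (ltnP y Y) => yY; last first.
    by apply: le_trans (fneg _ yY) _; rewrite divr_ge0 // ltW.
  have -> : f y = (f y * q y) / q y by rewrite mulfK // gt_eqF.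
  apply: ler_wpM2r; first by rewrite invr_ge0 ltW.
  apply: le_trans (ler_norm _) _.
  have := @le_sum_term R 1 Y (fun y => `|f y * q y|) y.
  rewrite y0 yY => h; have := h isT (fun _ _ => normr_ge0 _); rewrite /c'; lra.
apply: le_trans (@lower_gen f n c' n1 (fd0 dL) HLf c'0 Hc).
rewrite lee_fin fn; apply: ler_wpM2r; first by rewrite invr_ge0 ltW.
exact: ln_le_H.
Qed.

End BDproof.

Theorem claim6 (R : realType) (gamma : nat -> R) (delta theta : R)
  (gamma_pos : forall n : nat, (0 < n)%N -> 0 < gamma n)
  (gamma_lim : gamma n @[n --> \oo] --> 0)
  (delta_pos : 0 < delta) (theta_pos : 0 < theta) :
  forall eps : R, 0 < eps -> eps < delta ->
  exists h : R, forall n : nat, (1 <= n)%N ->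
    ((ln (n.+1)%:R / delta)%:E <= bd_expected_hitting_time gamma delta n)%E /\
    (bd_expected_hitting_time gamma delta n <= (ln (n%:R) / (delta - eps) + h)%:E)%E.
Proof.
move=> eps e0 ed.
have lim e : 0 < e -> exists N, forall y, (N <= y)%N -> gamma y <= e.
  move=> ep; have [N _ HN] := @cvgr_dist_lt _ _ _ _ _ gamma 0 gamma_lim e ep.
  exists N => y Ny; have := HN y Ny; rewrite /= sub0r normrN => h.
  exact: le_trans (ler_norm _) (ltW h).
have [N HN] := lim eps e0.
have [N' HN'] := lim delta delta_pos.
have [h Hh] := @upper_bound R gamma delta gamma_pos delta_pos eps e0 ed N.+1 (ltn0Sn N)
  (fun y Hy => HN y (ltnW Hy)).
exists h => n n1; split.
- exact: (@lower_bound R gamma delta gamma_pos delta_pos N' HN' n n1).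
- exact: Hh.
Qed.
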